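(* For any $n\ge1$, the map $\lambda$ defined on covering pairs $u\lessdot v$ of $(\mathsf{Tr}(n),\preccurlyeq)$ by $\lambda(u,v):=(i,u_i)$, where $i$ is the unique index with $u_i\neq v_i$, is an EL-labelling of $(\mathsf{Tr}(n),\preccurlyeq)$ with values in $\mathbb{Z}^2$ ordered lexicographically. Moreover, there is at most one $\lambda$-weakly decreasing saturated chain between any pair of comparable elements of $\mathsf{Tr}(n)$.
   Context: A triword of size $n$ is a word $u=u_1\cdots u_n$ with $u_i\in\{0,1,2\}$, $u_1\ne 2$, and such that $u_i=0$ implies $u_j\neq 1$ for all $j>i$; $\mathsf{Tr}(n)$ is their set, ordered componentwise: $u\preccurlyeq v$ iff $u_i\le v_i$ for all $i$. Covering pairs in this poset differ in exactly one letter, so $\lambda$ is well defined. A saturated chain is a sequence $x_1\lessdot x_2\lessdot\cdots\lessdot x_r$ of successive coverings; its label sequence is $(\lambda(x_1,x_2),\dots,\lambda(x_{r-1},x_r))$. A saturated chain is $\lambda$-increasing (resp. $\lambda$-weakly decreasing) if its label sequence is strictly increasing (resp. weakly decreasing) in the order of $\mathbb{Z}^2$ (lexicographic); one chain is $\lambda$-smaller than another if its label sequence is smaller in the lexicographic order on sequences induced by that order. For a bounded poset, $\lambda$ is an EL-labelling if for all $x\preccurlyeq y$ there is exactly one $\lambda$-increasing saturated chain from $x$ to $y$, and it is $\lambda$-minimal (lexicographically smallest) among all saturated chains from $x$ to $y$. *)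

(* Defs.v *)
From mathcomp Require Import all_boot all_order all_algebra.
Set Implicit Arguments. Unset Strict Implicit. Unset Printing Implicit Defensive.
Import Order.TTheory GRing.Theory Num.Theory.

(* Words of size n over {0,1,2}: u i is the letter u_{i+1} (0-based index). *)
Definition word (n : nat) := {ffun 'I_n -> 'I_3}.

Definition letter n (u : word n) (i : 'I_n) : nat := val (u i).

Definition is_triword n (u : word n) : bool :=
  [forall i : 'I_n, (val i == 0) ==> (letter u i != 2)] &&
  [forall i : 'I_n, forall j : 'I_n,
     ((letter u i == 0) && (val i < val j)) ==> (letter u j != 1)].

Definition wle n (u v : word n) : bool := [forall i, letter u i <= letter v i].
Definition wlt n (u v : word n) : bool := wle u v && (u != v).

Definition covers n (u v : word n) : bool :=
  [&& is_triword u, is_triword v, wlt u v &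
      ~~ [exists w : word n, [&& is_triword w, wlt u w & wlt w v]]].

Definition lam n (u v : word n) : int * int :=
  match [pick i : 'I_n | u i != v i] with
  | Some i => (Posz (val i).+1, Posz (letter u i))
  | None => (Posz 0, Posz 0)
  end.

Definition ltZ2 (a b : int * int) : bool :=
  ((a.1 < b.1)%R) || ((a.1 == b.1) && (a.2 < b.2)%R).
Definition leZ2 (a b : int * int) : bool := (a == b) || ltZ2 a b.

Fixpoint lexle (s t : seq (int * int)) : bool :=
  match s, t with
  | [::], _ => true
  | _ :: _, [::] => false
  | a :: s', b :: t' => ltZ2 a b || ((a == b) && lexle s' t')
  end.

(* A saturated chain x = x_1 <. x_2 <. ... <. x_r = y is represented by x
   together with the sequence s = [:: x_2; ...; x_r]. *)
Definition sat_chain n (x y : word n) (s : seq (word n)) : Prop :=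
  is_triword x /\ path (@covers n) x s /\ last x s = y.

Definition labels n (x : word n) (s : seq (word n)) : seq (int * int) :=
  pairmap (@lam n) x s.

Definition lam_increasing n (x : word n) s : bool := sorted ltZ2 (labels x s).
Definition lam_weakly_decreasing n (x : word n) s : bool :=
  sorted (fun a b => leZ2 b a) (labels x s).

Definition bounded_Tr n : Prop :=
  exists bot top : word n, [/\ is_triword bot, is_triword top &
    forall u, is_triword u -> wle bot u /\ wle u top].

Definition EL_labelling n : Prop :=
  bounded_Tr n /\
  forall x y : word n, is_triword x -> is_triword y -> wle x y ->
    exists s, [/\ sat_chain x y s, lam_increasing x s,
      (forall s', sat_chain x y s' -> lam_increasing x s' -> s' = s) &
      (forall t, sat_chain x y t -> lexle (labels x s) (labels x t))].

Definition at_most_one_weakly_decreasing n : Prop :=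
  forall x y : word n, is_triword x -> is_triword y -> wle x y ->
    forall s t, sat_chain x y s -> lam_weakly_decreasing x s ->
                sat_chain x y t -> lam_weakly_decreasing x t -> s = t.

(* Main.v *)
Require Import Defs.
From mathcomp Require Import all_boot all_order all_algebra.
Set Implicit Arguments. Unset Strict Implicit. Unset Printing Implicit Defensive.
Import Order.TTheory GRing.Theory Num.Theory.

Section S.
Variable n : nat.
Implicit Types (x y u v w z : word n).

Lemma letter_inj u v : (forall i, letter u i = letter v i) -> u = v.
Proof. move=> H; apply/ffunP=> i; apply: val_inj; exact: H. Qed.

Lemma wleP u v : reflect (forall i, letter u i <= letter v i) (wle u v).
Proof. exact: forallP. Qed.

Lemma wle_refl u : wle u u.
Proof. by apply/wleP. Qed.

Lemma wle_trans u v w : wle u v -> wle v w -> wle u w.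
Proof. move=> /wleP H1 /wleP H2; apply/wleP=> i; exact: leq_trans (H1 i) (H2 i). Qed.

Lemma wle_anti u v : wle u v -> wle v u -> u = v.
Proof.
move=> /wleP H1 /wleP H2; apply: letter_inj=> i; apply/eqP; by rewrite eqn_leq H1 H2.
Qed.

Lemma letter_le2 u i : letter u i <= 2.
Proof. rewrite /letter; by have := ltn_ord (u i). Qed.

Lemma tw1 u : is_triword u -> forall i : 'I_n, val i = 0 -> letter u i != 2.
Proof. case/andP=> /forallP H _ i Hi; move: (H i); by rewrite Hi. Qed.

Lemma tw2 u : is_triword u -> forall i j : 'I_n, letter u i = 0 -> val i < val j -> letter u j != 1.
Proof.
case/andP=> _ /forallP H i j Hi Hij; move: (H i) => /forallP /(_ j).
by rewrite Hi Hij.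
Qed.

Lemma twI u : (forall i : 'I_n, val i = 0 -> letter u i != 2) ->
  (forall i j : 'I_n, letter u i = 0 -> val i < val j -> letter u j != 1) -> is_triword u.
Proof.
move=> H1 H2; apply/andP; split; apply/forallP=> i.
  by apply/implyP=> /eqP /H1.
apply/forallP=> j; apply/implyP=> /andP[/eqP Hi Hij]; exact: H2 Hi Hij.
Qed.

Definition mix x y k : word n := [ffun i : 'I_n => if val i < k then y i else x i].

Lemma mix_tw x y k : is_triword x -> is_triword y -> wle x y -> is_triword (mix x y k).
Proof.
move=> tx ty /wleP Hxy; apply: twI.
  move=> i Hi; rewrite /letter ffunE; case: ifP=> _; [exact: tw1 ty i Hi|exact: tw1 tx i Hi].
move=> i j; rewrite /letter !ffunE => Hi Hij.
case: (ltnP (val j) k) => Hj.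
  have Hi' : val i < k by exact: ltn_trans Hij Hj.
  rewrite Hi' in Hi; exact: tw2 ty i j Hi Hij.
have Hx : letter x i = 0.
  move: Hi; case: ifP=> _ // Hy; move: (Hxy i); rewrite /letter Hy; by case: (val (x i)).
exact: tw2 tx i j Hx Hij.
Qed.

Lemma neq_ffun u v : u != v -> exists i, u i != v i.
Proof.
move=> H; apply/existsP; apply: contraR H => /existsPn H; apply/eqP/ffunP=> i.
by move: (H i); rewrite negbK => /eqP.
Qed.

Lemma letter_neq u v i : u i != v i -> letter u i != letter v i.
Proof. apply: contra => /eqP H; apply/eqP; exact: val_inj. Qed.

Lemma covers_spec u v : covers u v -> exists i,
  [/\ u i != v i, forall j, j != i -> u j = v j & letter u i < letter v i].
Proof.
case/and4P=> tu tv /andP[Huv Hne] Hno.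
have [i Hi] := neq_ffun Hne.
exists i; split => //; last first.
  rewrite ltn_neqAle letter_neq //; exact: (forallP Huv).
move=> j Hji; apply/eqP; apply/negPn/negP=> Hj.
move/existsP: Hno; apply.
have Hlt : (val i < val j) || (val j < val i).
  by rewrite -neq_ltn; apply: contra Hji => /eqP H; apply/eqP; apply: val_inj.
move/wleP: Huv => Huv.
set k := maxn (val i) (val j).
exists (mix u v k); rewrite mix_tw //; last by apply/wleP.
have le1 : wle u (mix u v k).
  apply/wleP=> p; rewrite /letter ffunE; case: ifP=> _ //; exact: Huv.
have le2 : wle (mix u v k) v.
  apply/wleP=> p; rewrite /letter ffunE; case: ifP=> // _; exact: Huv.
rewrite /wlt le1 le2 /=.
case/orP: Hlt => Hlt.
- have Hk : k = val j by apply/maxn_idPr; exact: ltnW.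
  apply/andP; split.
    apply/negP=> /eqP/ffunP/(_ i); rewrite ffunE Hk Hlt => E; by rewrite E eqxx in Hi.
  apply/negP=> /eqP/ffunP/(_ j); rewrite ffunE Hk ltnn => E; by rewrite E eqxx in Hj.
- have Hk : k = val i by apply/maxn_idPl; exact: ltnW.
  apply/andP; split.
    apply/negP=> /eqP/ffunP/(_ j); rewrite ffunE Hk Hlt => E; by rewrite E eqxx in Hj.
  apply/negP=> /eqP/ffunP/(_ i); rewrite ffunE Hk ltnn => E; by rewrite E eqxx in Hi.
Qed.

Lemma lam_eq x v i : x i != v i -> (forall j, j != i -> x j = v j) ->
  lam x v = (Posz (val i).+1, Posz (letter x i)).
Proof.
move=> Hi Ho; rewrite /lam; case: pickP => [j Hj|H].
  have -> : j = i by apply/eqP; apply: contraR Hj => /Ho ->; rewrite eqxx.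
  by [].
by move: (H i); rewrite Hi.
Qed.


Lemma covers_wlt x v : covers x v -> wlt x v.
Proof. by case/and4P. Qed.
Lemma covers_tw x v : covers x v -> is_triword v.
Proof. by case/and4P. Qed.

Lemma covers_det x v w : covers x v -> covers x w -> lam x v = lam x w -> v = w.
Proof.
move=> cv cw.
have [i [Hi Hoi Hlti]] := covers_spec cv.
have [i' [Hi' Hoi' Hlti']] := covers_spec cw.
rewrite (lam_eq Hi Hoi) (lam_eq Hi' Hoi'); case=> E _.
have {}E : i' = i by apply: val_inj; move: E => /= ->.
subst i'.
have Hag : forall j, j != i -> v j = w j by move=> j Hj; rewrite -Hoi // Hoi'.
have key : forall a b, covers x a -> covers x b -> (forall j, j != i -> a j = b j) ->
    letter a i <= letter b i -> a = b.
  move=> a b ca cb Hab Hle; apply/eqP; apply/negPn/negP=> Hne.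
  case/and4P: cb => _ _ _ /existsP; apply; exists a.
  rewrite (covers_tw ca) (covers_wlt ca) /wlt Hne /= andbT.
  apply/wleP=> j; case: (eqVneq j i) => [->|Hj] //; by rewrite /letter Hab.
case: (leqP (letter v i) (letter w i)) => H; first exact: key.
symmetry; apply: key => //; last exact: ltnW.
by move=> j Hj; rewrite Hag.
Qed.

Lemma chain_wle x s : path (@covers n) x s -> wle x (last x s).
Proof.
elim: s x => [|v s IH] x /=; first by rewrite wle_refl.
case/andP=> c p; apply: wle_trans (IH _ p); by case/andP: (covers_wlt c).
Qed.

Lemma chain_fix x s (j : 'I_n) : path (@covers n) x s ->
  all (fun l => l.1 != Posz (val j).+1) (labels x s) -> x j = last x s j.
Proof.
elim: s x => [|v s IH] x //= /andP[c p] /andP[Hl Ha].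
have [i [Hi Hoi _]] := covers_spec c.
rewrite -(IH _ p Ha) Hoi //.
apply: contra Hl; rewrite (lam_eq Hi Hoi) /= => /eqP ->; by [].
Qed.

Lemma chain_nil x s : path (@covers n) x s -> last x s = x -> s = [::].
Proof.
case: s => [|v s] //= /andP[c p] E.
have := chain_wle p; rewrite E => H.
case/andP: (covers_wlt c) => H1 /negP; case.
by rewrite (wle_anti H1 H).
Qed.

Lemma ltZ2_trans : transitive ltZ2.
Proof.
move=> b a c; rewrite /ltZ2.
case/orP=> [H1|/andP[/eqP E1 H1]]; case/orP=> [H2|/andP[/eqP E2 H2]].
- by rewrite (lt_trans H1 H2).
- by rewrite -E2 H1.
- by rewrite E1 H2.
- by rewrite E1 E2 eqxx (lt_trans H1 H2) orbT.
Qed.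

Lemma leZ2_trans : transitive leZ2.
Proof.
move=> b a c; rewrite /leZ2.
case/orP=> [/eqP ->|H1] //; case/orP=> [/eqP <-|H2]; first by rewrite H1 orbT.
by rewrite (ltZ2_trans H1 H2) orbT.
Qed.

Lemma rleZ2_trans : transitive (fun a b => leZ2 b a).
Proof. move=> b a c H1 H2; exact: leZ2_trans H2 H1. Qed.

Lemma ltZ2_fst a b : ltZ2 a b -> (a.1 <= b.1)%R.
Proof. by case/orP=> [/ltW|/andP[/eqP -> _]]. Qed.

Lemma leZ2_fst a b : leZ2 a b -> (a.1 <= b.1)%R.
Proof. by case/orP=> [/eqP ->|/ltZ2_fst]. Qed.

Lemma inc_pos x w t (i j : 'I_n) : path (@covers n) x (w :: t) ->
  sorted ltZ2 (labels x (w :: t)) -> x i != w i -> (forall k, k != i -> x k = w k) ->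
  x j != last x (w :: t) j -> val i <= val j.
Proof.
move=> p s Hi Hoi Hj; rewrite leqNgt; apply/negP=> Hlt.
move/negP: Hj; apply; apply/eqP; apply: chain_fix p _.
rewrite /labels /= (lam_eq Hi Hoi) /=.
apply/andP; split.
  apply/negP=> /eqP [] E; by move: Hlt; rewrite /= E ltnn.
move: s; rewrite /labels /= (lam_eq Hi Hoi) => /(order_path_min ltZ2_trans) /allP H.
apply/allP=> l /H /ltZ2_fst /= Hl; apply/negP=> /eqP E.
by rewrite E lez_nat ltnS leqNgt Hlt in Hl.
Qed.

Lemma dec_pos x w t (i j : 'I_n) : path (@covers n) x (w :: t) ->
  sorted (fun a b => leZ2 b a) (labels x (w :: t)) -> x i != w i -> (forall k, k != i -> x k = w k) ->
  x j != last x (w :: t) j -> val j <= val i.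
Proof.
move=> p s Hi Hoi Hj; rewrite leqNgt; apply/negP=> Hlt.
move/negP: Hj; apply; apply/eqP; apply: chain_fix p _.
rewrite /labels /= (lam_eq Hi Hoi) /=.
apply/andP; split.
  apply/negP=> /eqP [] E; by move: Hlt; rewrite /= E ltnn.
move: s; rewrite /labels /= (lam_eq Hi Hoi) => /(order_path_min rleZ2_trans) /allP H.
apply/allP=> l /H /leZ2_fst /= Hl; apply/negP=> /eqP E.
by rewrite E lez_nat ltnS leqNgt Hlt in Hl.
Qed.


Lemma neq_last x w t i : covers x w -> path (@covers n) w t -> x i != w i ->
  x i != last w t i.
Proof.
move=> c p Hi.
have H1 : letter x i < letter w i.
  rewrite ltn_neqAle letter_neq //=; case/andP: (covers_wlt c) => /wleP H _; exact: H.
have H2 : letter w i <= letter (last w t) i by move/wleP: (chain_wle p); exact.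
apply/negP=> /eqP E; move: (leq_trans H1 H2); by rewrite /letter -E ltnn.
Qed.

Lemma chain_uniq (r : rel (int * int)) (cmp : rel nat) :
  (forall a b, cmp a b -> cmp b a -> a = b) ->
  (forall x w t (i j : 'I_n), path (@covers n) x (w :: t) -> sorted r (labels x (w :: t)) ->
     x i != w i -> (forall k, k != i -> x k = w k) -> x j != last x (w :: t) j ->
     cmp (val i) (val j)) ->
  forall s x t, path (@covers n) x s -> sorted r (labels x s) ->
    path (@covers n) x t -> sorted r (labels x t) -> last x s = last x t -> s = t.
Proof.
move=> anti Hpos; elim=> [|v s IH] x [|w t] //.
- move=> _ _ pt _ E; by have := chain_nil pt (esym E).
- move=> ps _ _ _ E; by have := chain_nil ps E.
move=> ps rs pt rt E.
have /andP[cv ps'] := ps; have /andP[cw pt'] := pt.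
have [iv [Hv Hov _]] := covers_spec cv.
have [iw [Hw How _]] := covers_spec cw.
have Hw' : x iw != last x (v :: s) iw by rewrite E /=; exact: neq_last.
have Hv' : x iv != last x (w :: t) iv by rewrite -E /=; exact: neq_last.
have c1 := Hpos _ _ _ _ _ ps rs Hv Hov Hw'.
have c2 := Hpos _ _ _ _ _ pt rt Hw How Hv'.
have Eiv : iv = iw by apply: val_inj; exact: anti.
subst iw.
have Evw : v = w by apply: (covers_det cv cw); rewrite (lam_eq Hv Hov) (lam_eq Hw How).
subst w; congr (_ :: _).
apply: (IH v) => //.
- by move: rs; rewrite /labels /= => /path_sorted.
- by move: rt; rewrite /labels /= => /path_sorted.
Qed.

Lemma lexmin t x s : path (@covers n) x s -> sorted ltZ2 (labels x s) ->
  path (@covers n) x t -> last x t = last x s -> lexle (labels x s) (labels x t).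
Proof.
elim: t x s => [|w t IH] x [|v s] //.
- move=> ps _ _ E; by have := chain_nil ps (esym E).
move=> ps rs pt E.
have /andP[cv ps'] := ps; have /andP[cw pt'] := pt.
have [iv [Hv Hov _]] := covers_spec cv.
have [iw [Hw How _]] := covers_spec cw.
have Hw' : x iw != last x (v :: s) iw by rewrite -E /=; exact: neq_last.
have c1 := inc_pos ps rs Hv Hov Hw'.
rewrite /labels /= (lam_eq Hv Hov) (lam_eq Hw How).
move: c1; rewrite leq_eqVlt => /orP[/eqP Ee|Hlt].
  have Eiv : iv = iw by apply: val_inj.
  subst iw.
  have Evw : v = w by apply: (covers_det cv cw); rewrite (lam_eq Hv Hov) (lam_eq Hw How).
  subst w.
  apply/orP; right; rewrite eqxx /=.
  apply: IH => //.
  by move: rs; rewrite /labels /= => /path_sorted.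
by apply/orP; left; rewrite /ltZ2 /= ltz_nat ltnS Hlt.
Qed.


Lemma exist_inc y : is_triword y -> forall m x, #|[set z | wlt x z && wle z y]| < m ->
  is_triword x -> wle x y ->
  exists s, [/\ path (@covers n) x s, last x s = y & sorted ltZ2 (labels x s)].
Proof.
move=> ty; elim=> [|m IH] x // Hm tx Hxy.
case: (eqVneq x y) => [<-|Hne]; first by exists [::].
have [i1 Hi1] := neq_ffun Hne.
case: (arg_minnP (P := fun i => x i != y i) (fun i : 'I_n => val i) Hi1) => i0 Hi0 Hmin.
have Hpre : forall j : 'I_n, val j < val i0 -> x j = y j.
  move=> j Hj; apply/eqP; apply/negPn/negP=> Hn; move: (Hmin j Hn); by rewrite leqNgt Hj.
pose Q := fun z : word n => [&& is_triword z, wlt x z, wle z y &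
   [forall j, (j != i0) ==> (z j == x j)]].
pose zz := mix x y (val i0).+1.
have Qzz : Q zz.
  apply/and4P; split.
  - exact: mix_tw.
  - apply/andP; split.
      apply/wleP=> p; rewrite /letter ffunE; case: ifP=> _ //; exact: (forallP Hxy).
    apply/negP=> /eqP /ffunP /(_ i0); rewrite ffunE ltnSn => E; by rewrite E eqxx in Hi0.
  - apply/wleP=> p; rewrite /letter ffunE; case: ifP=> _ //; exact: (forallP Hxy).
  - apply/forallP=> j; apply/implyP=> Hj; rewrite ffunE; case: ifP=> H //.
    rewrite ltnS leq_eqVlt in H; case/orP: H => [/eqP H|H].
      by move: Hj; rewrite (_ : j = i0) ?eqxx //; apply: val_inj.
    by rewrite Hpre.
case: (arg_minnP (P := Q) (fun z => letter z i0) Qzz) => w Qw wmin.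
case/and4P: Qw => tw Hxw Hwy /forallP Hag.
have Hag' : forall j, j != i0 -> x j = w j.
  by move=> j Hj; move: (Hag j); rewrite Hj => /eqP.
have Hi0w : x i0 != w i0.
  case/andP: Hxw => _; apply: contra => /eqP E; apply/eqP/ffunP=> j.
  case: (eqVneq j i0) => [->|Hj] //; exact: Hag'.
have cw : covers x w.
  rewrite /covers tx tw Hxw /=; apply/negP=> /existsP [z /and3P[tz Hxz Hzw]].
  have Hle : forall j, letter z j <= letter w j by apply/wleP; case/andP: Hzw.
  have Hle' : forall j, letter x j <= letter z j by apply/wleP; case/andP: Hxz.
  have Hzag : forall j, j != i0 -> z j = x j.
    move=> j Hj; apply: val_inj; apply/eqP; rewrite eqn_leq Hle' andbT.
    by move: (Hle j); rewrite /letter -(Hag' j Hj).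
  have Qz : Q z.
    rewrite /Q tz Hxz /=; apply/andP; split.
      apply: wle_trans Hwy; by case/andP: Hzw.
    by apply/forallP=> j; apply/implyP=> Hj; rewrite Hzag.
  have := wmin z Qz => Hwz.
  case/andP: Hzw => _ /negP; apply; apply/eqP/ffunP=> j.
  case: (eqVneq j i0) => [->|Hj].
    apply: val_inj; apply/eqP; by rewrite eqn_leq Hle.
  by rewrite Hzag // Hag'.
have Hcard : #|[set z | wlt w z && wle z y]| < #|[set z | wlt x z && wle z y]|.
  apply: proper_card; apply/properP; split.
    apply/subsetP=> z; rewrite !inE => /andP[/andP[Hwz Hnz] ->]; rewrite andbT.
    case/andP: Hxw => Hxw' Hnxw.
    rewrite /wlt (wle_trans Hxw' Hwz) /=; apply: contra Hnxw => /eqP E.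
    by rewrite E in Hxw'; apply/eqP; rewrite E; exact: wle_anti Hxw' Hwz.
  exists w; first by rewrite inE Hxw Hwy.
  by rewrite inE /wlt eqxx andbF.
have [s [ps ls rs]] := IH w (leq_trans Hcard Hm) tw Hwy.
exists (w :: s); split => //=; first by rewrite cw.
rewrite /labels /=; move: rs; rewrite /labels.
case: s ps ls => [|v s] //= /andP[cv ps2] ls ->; rewrite andbT.
have [iv [Hv Hov Hltv]] := covers_spec cv.
rewrite (lam_eq Hi0w Hag') (lam_eq Hv Hov) /ltZ2 /= ltz_nat ltnS.
have : val i0 <= val iv.
  case: (eqVneq iv i0) => [->//|Hiv]; apply: Hmin.
  rewrite (Hag' _ Hiv) -ls /=; exact: neq_last cv ps2 Hv.
rewrite leq_eqVlt => /orP[/eqP E|->] //.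
have E' : iv = i0 by apply: val_inj.
subst iv; rewrite eqxx /= ltz_nat.
case/andP: (covers_wlt cw) => /wleP H _.
by rewrite ltnn /= ltn_neqAle letter_neq // H.
Qed.

End S.

Lemma bounded n : bounded_Tr n.
Proof.
exists [ffun _ => (@Ordinal 3 0 isT)], [ffun i : 'I_n => if val i == 0 then (@Ordinal 3 1 isT) else (@Ordinal 3 2 isT)].
split.
- apply: twI; by move=> *; rewrite /letter ffunE.
- apply: twI.
    by move=> i Hi; rewrite /letter ffunE Hi.
  by move=> i j; rewrite /letter ffunE; case: ifP.
- move=> u tu; split; apply/wleP=> i; rewrite /letter ffunE //.
  case: ifP => [/eqP Hi|_] /=; last exact: letter_le2.
  have := tw1 tu Hi; have := letter_le2 u i; rewrite /letter.
  by case: (u i) => [[|[|[|k]]] Hk].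
Qed.

Theorem theorem2p1 (n : nat) : (1 <= n)%N ->
  EL_labelling n /\ at_most_one_weakly_decreasing n.
Proof.
move=> _; split; last first.
  move=> x y tx ty Hxy s t [_ [ps ls]] rs [_ [pt lt]] rt.
  have anti : forall a b : nat, (fun a b => b <= a) a b -> (fun a b => b <= a) b a -> a = b.
    by move=> a b H1 H2; apply/eqP; rewrite eqn_leq H1 H2.
  apply: (chain_uniq anti (@dec_pos n)) ps rs pt rt _.
  by rewrite ls lt.
split; first exact: bounded.
move=> x y tx ty Hxy.
have [s [ps ls rs]] := exist_inc ty (ltnSn _) tx Hxy.
exists s; split => //.
- move=> s' [_ [ps' ls']] rs'.
  have anti : forall a b : nat, a <= b -> b <= a -> a = b.
    by move=> a b H1 H2; apply/eqP; rewrite eqn_leq H1 H2.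
  apply: (chain_uniq anti (@inc_pos n)) ps' rs' ps rs _.
  by rewrite ls ls'.
- move=> t [_ [pt lt]]; apply: lexmin => //; by rewrite ls lt.
Qed.
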